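(* Consider the following single-link transmission system. Time is slotted, $t=0,1,2,\dots$. A fixed amount $\delta>0$ of mutual information is called a data unit. A sequence of packets $f=0,1,2,\dots$ is transmitted one at a time; packet $f$ has length $L[f]$, a positive integer number of data units, with $\{L[f]\}$ i.i.d. taking values in a finite set $\mathcal{L}$, and $L_{\max}=\max_{L\in\mathcal{L}}L$. The channel gain $\alpha(t)>0$ is i.i.d. over slots taking values in a finite set $\mathcal{A}=\{\alpha_1,\dots,\alpha_{|\mathcal{A}|}\}$ with probabilities $\phi(\alpha_i)$. In each slot the source picks a power spectral density $P(t)\in\mathcal{P}=\{P_1,\dots,P_{|\mathcal{P}|}\}$ with $0<P_1<P_2<\cdots<P_{|\mathcal{P}|}$, before observing $\alpha(t)$; the receiver then accumulates $K(\alpha(t),P(t))$ data units, where $K:\mathcal{A}\times\mathcal{P}\to\{1,2,3,\dots\}$ is nondecreasing in each argument, and $K_{\min}=\min_{\alpha\in\mathcal{A}}K(\alpha,P_1)$. Frame $f$ starts at slot $t_f$ (with $t_0=0$) and ends at the first slot $t_{f+1}-1$ such that $\sum_{t=t_f}^{t_{f+1}-1}K(\alpha(t),P(t))\ge L[f]$; $T[f]=t_{f+1}-t_f$. Let $\beta>0$ with $P_1<\beta$, and let $V>0$. The proposed algorithm maintains $Q[0]=0$, $Q[f+1]=\max\{Q[f]+\sum_{t=t_f}^{t_{f+1}-1}(P(t)-\beta),0\}$, and defines $R_f(P)=V+Q[f](P-\beta)$ for $P\in\mathcal{P}$. At the start of frame $f$, having observed $Q[f]$ and $L[f]$, it chooses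 power allocations over the frame so as to minimize $\mathbb{E}\big[\sum_{t=t_f}^{t_{f+1}-1}R_f(P(t))\,\big|\,Q[f],L[f]\big]$ subject to $\sum_{t=t_f}^{t_{f+1}-1}K(\alpha(t),P(t))\ge L[f]$; in particular, whenever $R_f(P_j)<0$ for some $P_j\in\mathcal{P}$, it uses $P(t)=P_1$ in every slot of frame $f$ (and otherwise uses a dynamic-programming solution of the minimization). Then for all $f\in\{1,2,3,\dots\}$, \[Q[f]\le \max\left\{\frac{V}{\beta-P_1}+\left\lceil\frac{L_{\max}}{K_{\min}}\right\rceil\,(P_{|\mathcal{P}|}-\beta),\;0\right\}.\]
   Context: $\lceil x\rceil$ is the smallest integer greater than or equal to $x$. The source observes $L[f]$ at the start of frame $f$, does not observe $\alpha(t)$ before choosing $P(t)$, knows the distribution $\phi$, and learns $\alpha(t)$ (hence the delivered mutual information) by feedback at the end of slot $t$. The source cannot start a new packet before the previous one is decoded. *)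

(* Defs.v *)
From HB Require Import structures.
From mathcomp Require Import all_boot all_order all_algebra.
From mathcomp Require Import archimedean reals.
Set Implicit Arguments. Unset Strict Implicit. Unset Printing Implicit Defensive.
Import Order.TTheory GRing.Theory Num.Theory.
Local Open Scope ring_scope.

Fixpoint Qq (R : realType) (beta : R) (P : nat -> R) (tf : nat -> nat) (f : nat)
  : R :=
  match f with
  | 0 => 0
  | f'.+1 => Num.max (Qq beta P tf f' + \sum_(tf f' <= t < tf f'.+1) (P t - beta)) 0
  end.

Definition Kmin (R : realType) (K : R -> R -> nat) (As : seq R) (P1 : R) : nat :=
  \big[minn/K (head 0 As) P1]_(a <- As) K a P1.

Definition Lmax (Ls : seq nat) : nat := \max_(l <- Ls) l.

(* Main.v *)
Require Import Defs.
From HB Require Import structures.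
From mathcomp Require Import all_boot all_order all_algebra.
From mathcomp Require Import archimedean reals.
From mathcomp Require Import lra zify.
Import Order.TTheory GRing.Theory Num.Theory.
Local Open Scope ring_scope.

Lemma sorted_bounds (R : realType) (p : R) (s : seq R) :
  path <%R p s -> forall x, x \in p :: s -> p <= x /\ x <= last p s.
Proof.
elim: s p => [|y s IH] p /=.
  by move=> _ x; rewrite inE => /eqP ->.
move=> /andP [pys ps] x; rewrite inE => /orP [/eqP ->|xin].
  split=> //; have [h1 h2] := IH y ps y (mem_head _ _).
  by apply: le_trans h2; apply: ltW.
have [h1 h2] := IH y ps x xin; split=> //; apply: le_trans h1; exact: ltW.
Qed.

Lemma sorted_bounds2 (R : realType) (s : seq R) x :
  s != [::] -> sorted <%R s -> x \in s -> head 0 s <= x /\ x <= last 0 s.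
Proof. case: s => //= p s _ ps xin; exact: sorted_bounds. Qed.

Lemma head_in (R : realType) (s : seq R) : s != [::] -> head 0 s \in s.
Proof. by case: s => //= p s _; rewrite mem_head. Qed.

Lemma Lmax_ge (Ls : seq nat) x : x \in Ls -> (x <= Lmax Ls)%N.
Proof.
rewrite /Lmax; elim: Ls => //= y s IH; rewrite inE big_cons => /orP [/eqP ->|xin].
  exact: leq_maxl.
apply: leq_trans (IH xin) _; exact: leq_maxr.
Qed.

Lemma Kmin_le (R : realType) (K : R -> R -> nat) As P1 a :
  a \in As -> (Kmin K As P1 <= K a P1)%N.
Proof.
rewrite /Kmin; move: (K (head 0 As) P1) => x0.
elim: As => //= y s IH; rewrite inE big_cons => /orP [/eqP ->|ain].
  exact: geq_minl.
apply: leq_trans (IH ain); exact: geq_minr.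
Qed.

Lemma Kmin_pos (R : realType) (K : R -> R -> nat) As P1 :
  As != [::] -> (forall a, a \in As -> (0 < K a P1)%N) -> (0 < Kmin K As P1)%N.
Proof.
move=> ne pos; rewrite /Kmin big_seq; apply: (big_ind (fun n => 0 < n)%N).
- by apply: pos; case: As ne => //= a s _; rewrite mem_head.
- by move=> m n m0 n0; rewrite leq_min m0 n0.
- by move=> a ain; apply: pos.
Qed.

Lemma TNl (R : realType) (a b k : nat) (N : int) :
  (0 < b)%N -> (a * b < k)%N -> (k%:R / b%:R : R) <= N%:~R -> ((a.+1)%:R : R) <= N%:~R.
Proof.
move=> b0 h1 h3.
have h2 : (a%:R : R) < k%:R / b%:R.
  by rewrite ltr_pdivlMr ?ltr0n // -natrM ltr_nat.
have h4 : ((a%:Z)%:~R : R) < N%:~R by rewrite -pmulrn; exact: lt_le_trans h2 h3.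
rewrite ltr_int in h4.
have h5 : ((a.+1)%:Z <= N)%R by rewrite -addn1 PoszD lezD1.
by rewrite pmulrn ler_int.
Qed.

Theorem mainTheorem2 (R : realType)
    (As : seq R) (Ps : seq R) (Ls : seq nat) (K : R -> R -> nat)
    (beta V : R)
    (alpha : nat -> R) (L : nat -> nat) (P : nat -> R) (tf : nat -> nat) :
    (* the finite set A of channel gains: nonempty, positive *)
    As != [::] ->
    (forall a, a \in As -> 0 < a) ->
    (* the finite power set P = {P_1 < ... < P_|P|}, P_1 > 0 *)
    Ps != [::] ->
    sorted <%R Ps ->
    0 < head 0 Ps ->
    (* the finite set of packet lengths: positive integers *)
    Ls != [::] ->
    (forall l, l \in Ls -> (0 < l)%N) ->
    (* K : A x P -> {1,2,...}, nondecreasing in each argument *)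
    (forall a p, a \in As -> p \in Ps -> (0 < K a p)%N) ->
    (forall a a' p, a \in As -> a' \in As -> p \in Ps -> a <= a' ->
       (K a p <= K a' p)%N) ->
    (forall a p p', a \in As -> p \in Ps -> p' \in Ps -> p <= p' ->
       (K a p <= K a p')%N) ->
    (* parameters *)
    0 < beta -> head 0 Ps < beta -> 0 < V ->
    (* a realization of the system *)
    (forall t, alpha t \in As) ->
    (forall f, L f \in Ls) ->
    (forall t, P t \in Ps) ->
    (* frame structure: t_0 = 0, frame f ends at the first slot at which the
       accumulated data units reach L[f] *)
    tf 0 = 0%N ->
    (forall f, (tf f < tf f.+1)%N) ->
    (forall f, (L f <= \sum_(tf f <= t < tf f.+1) K (alpha t) (P t))%N) ->
    (forall f, (\sum_(tf f <= t < (tf f.+1).-1) K (alpha t) (P t) < L f)%N) ->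
    (* the algorithm's rule: if R_f(P_j) = V + Q[f](P_j - beta) < 0 for some
       P_j in P, then P(t) = P_1 in every slot of frame f *)
    (forall f, (exists2 p, p \in Ps & V + Qq beta P tf f * (p - beta) < 0) ->
       forall t, (tf f <= t < tf f.+1)%N -> P t = head 0 Ps) ->
    forall f, (0 < f)%N ->
      Qq beta P tf f <=
        Num.max (V / (beta - head 0 Ps)
                 + ((Num.ceil ((Lmax Ls)%:R / (Kmin K As (head 0 Ps))%:R : R))%:~R : R)
                   * (last 0 Ps - beta)) 0.
Proof.
move=> Ane Apos Pne Psort P1pos Lne Lpos Kpos Kmona Kmonp bpos P1b Vpos
  alphaA LLs PPs tf0 tfinc Lle Llt rule.
set P1 := head 0 Ps; set Pm := last 0 Ps.
set C := V / (beta - P1).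
set N := Num.ceil _.
have Pb : forall x, x \in Ps -> P1 <= x /\ x <= Pm.
  by move=> x; apply: sorted_bounds2.
have P1in : P1 \in Ps by apply: head_in.
have bP1 : 0 < beta - P1 by rewrite subr_gt0.
have Kmp : (0 < Kmin K As P1)%N by apply: Kmin_pos => // a ain; apply: Kpos.
have KgeK : forall t, (Kmin K As P1 <= K (alpha t) (P t))%N.
  move=> t; apply: leq_trans (@Kmin_le R K As P1 _ (alphaA t)) _.
  by apply: Kmonp => //; case: (Pb _ (PPs t)).
have TN : forall f, ((tf f.+1 - tf f)%:R : R) <= N%:~R.
  move=> f.
  have h1 : (((tf f.+1).-1 - tf f) * Kmin K As P1 < Lmax Ls)%N.
    apply: (leq_trans _ (@Lmax_ge _ _ (LLs f))).
    apply: (leq_ltn_trans _ (Llt f)).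
    rewrite -sum_nat_const_nat; apply: leq_sum => t _; exact: KgeK.
  have e : (tf f.+1 - tf f = ((tf f.+1).-1 - tf f).+1)%N.
    have := tfinc f; lia.
  rewrite e; exact: (@TNl R _ _ _ _ Kmp h1 (ceil_ge _)).
suff H : forall f, Qq beta P tf f <= Num.max (C + N%:~R * (Pm - beta)) 0.
  by move=> f _; apply: H.
elim=> [|f IH] /=; first by rewrite le_max lexx orbT.
rewrite ge_max; apply/andP; split; last by rewrite le_max lexx orbT.
set S := \sum_(_ <= _ < _) _.
have [Pmb|bPm] := leP Pm beta.
  have S0 : S <= 0.
    apply: sumr_le0 => t _; rewrite subr_le0; case: (Pb _ (PPs t)) => _ h.
    exact: le_trans h Pmb.
  apply: le_trans IH; lra.
have [CQ|QC] := ltP C (Qq beta P tf f).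
  have S0 : S <= 0.
    rewrite /S big_nat; apply: sumr_le0 => t tin.
    rewrite (rule f _ t tin) ?subr_le0 ?ltW //.
    exists P1 => //.
    rewrite /C ltr_pdivrMr // in CQ.
    move: CQ; rewrite mulrBr; lra.
  apply: le_trans IH; lra.
have SN : S <= N%:~R * (Pm - beta).
  apply: le_trans (_ : \sum_(tf f <= t < tf f.+1) (Pm - beta) <= _).
    by apply: ler_sum => t _; rewrite lerD2r; case: (Pb _ (PPs t)).
  rewrite sumr_const_nat -mulr_natl; rewrite ler_pM2r ?subr_gt0 //.
rewrite le_max; apply/orP; left; exact: lerD QC SN.
Qed.
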